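(* Let $N\ge0$ be an integer and $a,b,c$ complex numbers such that $N+c-a-b\ne0$ and all denominators below are nonzero. Then \[ {}_{2}F_{1}^{[N]}\left(\begin{matrix}a,b\\ c\end{matrix};\frac{N}{N+c-a-b}\right) =\frac{(c-a)_{N}(c-b)_{N}}{(c)_{N}(c-a-b)_{N}}. \]
   Context: $(x)_m=x(x+1)\cdots(x+m-1)$ is the rising factorial, $(x)_0=1$. For $N\ge0$, \[ {}_{2}F_{1}^{[N]}\left(\begin{matrix}a,b\\ c\end{matrix};z\right)=\sum_{m=0}^{N}\frac{(a)_m(b)_m}{(c)_m\, m!}\,\frac{(N+1-m)_m}{(Nz^{-1}-m)_m}. \] *)

(* Defs.v *)
From HB Require Import structures.
From mathcomp Require Import all_boot all_order all_algebra.
From mathcomp Require Export complex.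
From mathcomp Require Export reals.
Set Implicit Arguments. Unset Strict Implicit. Unset Printing Implicit Defensive.
Import Order.TTheory GRing.Theory Num.Theory.
Local Open Scope ring_scope.

Definition rfact {F : fieldType} (x : F) (m : nat) : F :=
  \prod_(i < m) (x + i%:R).

Definition F21N {F : fieldType} (N : nat) (a b c z : F) : F :=
  \sum_(m < N.+1)
    (rfact a m * rfact b m) / (rfact c m * m`!%:R)
    * (rfact ((N.+1 - m)%:R) m / rfact (N%:R / z - m%:R) m).

(* Main.v *)
Require Import Defs.
From HB Require Import structures.
From mathcomp Require Import all_boot all_order all_algebra.
From mathcomp Require Import complex reals.
From mathcomp Require Import ring zify.
Import Order.TTheory GRing.Theory Num.Theory.
Local Open Scope ring_scope.
Local Open Scope complex_scope.

Section S.
Variable F : numFieldType.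

Lemma rfact0 (x : F) : rfact x 0 = 1.
Proof. by rewrite /rfact big_ord0. Qed.

Lemma rfactSr (x : F) n : rfact x n.+1 = rfact x n * (x + n%:R).
Proof. by rewrite /rfact big_ord_recr. Qed.

Lemma rfactSl (x : F) n : rfact x n.+1 = x * rfact (x + 1) n.
Proof.
rewrite /rfact big_ord_recl /= addr0; congr (_ * _).
by apply: eq_bigr => i _; rewrite /bump /= natrD addrA.
Qed.

Lemma rfactD (x : F) p q : rfact x (p + q) = rfact x p * rfact (x + p%:R) q.
Proof.
elim: q => [|q IH]; first by rewrite addn0 rfact0 mulr1.
by rewrite addnS !rfactSr IH natrD addrA mulrA.
Qed.

Lemma rfact_nat n m : (m <= n)%N -> rfact (((n - m).+1)%:R : F) m = (n ^_ m)%:R.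
Proof.
elim: m n => [|m IH] [|n] //=; rewrite ?rfact0 ?ffactn0 //.
move=> H; rewrite rfactSr subSS IH // ffactSS -natrD natrM mulrC.
by congr (_ * _); congr (_%:R); lia.
Qed.

Variables a b c : F.
Definition sab := c - a - b.
Definition u N m := ('C(N,m))%:R * rfact a m * rfact b m *
   rfact (c + m%:R) (N - m) * rfact sab (N - m).
Definition w N k := - ((a + k%:R) * (b + k%:R)) * u N k.

Lemma u_big N : u N N.+1 = 0.
Proof. by rewrite /u bin_small // !mul0r. Qed.

Lemma step N m : u N.+1 m = (c - a + N%:R) * (c - b + N%:R) * u N m + w N m
   - (if m is k.+1 then w N k else 0).
Proof.
case: m => [|k].
  rewrite /w /u !bin0 !subn0 !rfact0 !addr0 rfactSr (rfactSr sab) /sab; ring.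
case: (ltngtP k N) => Hk.
- have [j ->] : exists j, N = (k + j).+1 by exists (N - k.+1)%N; lia.
  have e1 : ((k + j).+2 - k.+1 = j.+1)%N by lia.
  have e2 : ((k + j).+1 - k.+1 = j)%N by lia.
  have e3 : ((k + j).+1 - k = j.+1)%N by lia.
  rewrite /w /u e1 e2 e3 binS natrD.
  rewrite (rfactSl (c + k%:R)) !rfactSr -(natr1 k) ?addrA.
  have Hb : (k.+1)%:R * ('C((k+j).+1, k.+1))%:R = (j.+1)%:R * ('C((k+j).+1, k))%:R :> F.
    by rewrite -!natrM mul_bin_left e3.
  have Hk1 : (k.+1)%:R != 0 :> F by rewrite pnatr_eq0.
  have -> : ('C((k+j).+1, k.+1))%:R = (j.+1)%:R * ('C((k+j).+1, k))%:R / (k.+1)%:R :> F.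
    by rewrite -Hb mulrC mulKf.
  rewrite /sab -!natr1 !natrD; field.
  by rewrite natr1.
- have h1 : 'C(N.+1, k.+1) = 0%N by rewrite bin_small.
  have h2 : 'C(N, k.+1) = 0%N by rewrite bin_small // ltnS ltnW.
  have h3 : 'C(N, k) = 0%N by rewrite bin_small.
  rewrite /w /u h1 h2 h3 !mul0r; ring.
- subst k. rewrite /w u_big /u !binn !subnn !rfact0 rfactSr (rfactSr b); ring.
Qed.

Lemma saal N : \sum_(m < N.+1) u N m = rfact (c - a) N * rfact (c - b) N.
Proof.
elim: N => [|N IH].
  by rewrite big_ord1 /u bin0 ?subnn !rfact0 !mulr1.
rewrite (eq_bigr (fun m : 'I_N.+2 => (c - a + N%:R) * (c - b + N%:R) * u N m + w N m
   - (if (m:nat) is k.+1 then w N k else 0))); last by move=> i _; rewrite step.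
rewrite sumrB big_split /= -mulr_sumr.
rewrite (big_ord_recr N.+1 (fun i : 'I_N.+2 => u N i)) /= u_big addr0 IH.
rewrite (big_ord_recr N.+1 (fun i : 'I_N.+2 => w N i)) /= {2}/w u_big mulr0 addr0.
rewrite [X in _ - X]big_ord_recl /= add0r.
under [X in _ - X]eq_bigr do rewrite add0n.
rewrite addrK.
rewrite !rfactSr. ring.
Qed.
End S.

Theorem corollary4p1 (R : realType) (N : nat) (a b c : R[i]) :
  N%:R + c - a - b != 0 ->
  (forall m : nat, (m <= N)%N -> rfact c m != 0) ->
  (forall m : nat, (m <= N)%N ->
     rfact (N%:R / (N%:R / (N%:R + c - a - b)) - m%:R) m != 0) ->
  rfact (c - a - b) N != 0 ->
  F21N N a b c (N%:R / (N%:R + c - a - b)) =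
  (rfact (c - a) N * rfact (c - b) N) / (rfact c N * rfact (c - a - b) N).
Proof.
move=> Hw Hc Hq Hs.
case: N Hw Hc Hq Hs => [|N] Hw Hc Hq Hs.
  by rewrite /F21N big_ord1 !rfact0 !(mul1r, mulr1, invr1).
set w := N.+1%:R + c - a - b.
have Hn : N.+1%:R != 0 :> R[i] by rewrite pnatr_eq0.
have Hz : N.+1%:R / (N.+1%:R / w) = w by rewrite invf_div mulrC divfK.
rewrite /F21N Hz -(saal _ a b c N.+1) mulr_suml.
apply: eq_bigr => -[m Hm] _ /=.
have Hm' : (m <= N.+1)%N by [].
have e : (N.+2 - m = (N.+1 - m).+1)%N by lia.
rewrite e rfact_nat // -bin_ffact natrM.
have eC : rfact c N.+1 = rfact c m * rfact (c + m%:R) (N.+1 - m).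
  by rewrite -rfactD subnKC.
have eS : rfact (c - a - b) N.+1 = rfact (sab _ a b c) (N.+1 - m) * rfact (w - m%:R) m.
  rewrite -{1}(subnK Hm') rfactD; congr (_ * _); congr (rfact _ _).
  by rewrite /sab /w natrB //; ring.
have H1 := Hc m Hm'. have H2 := Hc _ (leqnn N.+1). rewrite eC mulf_eq0 negb_or in H2.
case/andP: H2 => _ H2.
have H3 := Hs. rewrite eS mulf_eq0 negb_or in H3. case/andP: H3 => H3 H4.
have H5 : (m`!)%:R != 0 :> R[i] by rewrite pnatr_eq0 -lt0n fact_gt0.
have H6 : ((N.+1 - m)`!)%:R != 0 :> R[i] by rewrite pnatr_eq0 -lt0n fact_gt0.
rewrite /u eC eS /sab.
rewrite /sab in H3.
field.
by rewrite ?H1 ?H2 ?H3 ?H4 ?H5 ?H6.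
Qed.
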